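(* Let $f:\mathbb{C}^2\to\mathbb{C}$ be a convenient mixed polynomial that is strongly Newton non-degenerate in Oka's sense. Then $f$ has a strongly Newton inner non-degenerate boundary.
   Context: Mixed polynomials: $f=\sum c_{\nu,\mu}z^\nu\bar z^\mu$ with $z=(u,v)\in\mathbb{C}^2$, $z^\nu=u^{\nu_1}v^{\nu_2}$, $\bar z^\mu=\bar u^{\mu_1}\bar v^{\mu_2}$, regarded as a real map $\mathbb{R}^4\to\mathbb{R}^2$. $\Sigma_f$ (the critical points) is the common zero set of $f_u\overline{f_{\bar v}}-\overline{f_{\bar u}}f_v$, $|f_u|^2-|f_{\bar u}|^2$, $|f_v|^2-|f_{\bar v}|^2$ (Wirtinger derivatives), equivalently where the real Jacobian has rank $<2$. $(\mathbb{C}^* )^2=(\mathbb{C}\setminus\{0\})^2$. Newton data: $\mathrm{supp}(f)=\{\nu+\mu:c_{\nu,\mu}\ne0\}$; $\Gamma_+(f)$ = convex hull of $\bigcup_{w\in\mathrm{supp}(f)}(w+\mathbb{R}^2_{\ge0})$, with $N\ge1$ compact 1-faces; $\Gamma(f)$ = lattice points on compact faces. $f$ is convenient if $\Gamma(f)$ meets both coordinate axes. For a compact face $\Delta$ (vertex or edge), $f_\Delta$ = sum of terms with $\nu+\mu\in\Delta$. Compact 1-faces $\Delta(P_1),\dots,\Delta(P_N)$, $P_i=(p_{i,1},p_{i,2})$ primitive positive weight vector orthogonal to the edge, ordered so $p_{i,1}/p_{i,2}$ strictly decreases; $f_{P_i}:=f_{\Delta(P_i)}$. A vertex is extreme if on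 exactly one compact 1-face, non-extreme if on two. $f$ is strongly Newton non-degenerate (Oka) if $\Sigma_{f_\Delta}\cap(\mathbb{C}^* )^2=\emptyset$ for every compact face $\Delta$ (vertices and edges). $f$ has a strongly Newton inner non-degenerate boundary if (i) $f_{P_1}$ has no critical points in $\mathbb{C}^2\setminus\{v=0\}$ and $f_{P_N}$ none in $\mathbb{C}^2\setminus\{u=0\}$; (ii) for each compact 1-face and non-extreme vertex $\Delta$, $f_\Delta$ has no critical points in $(\mathbb{C}^* )^2$. *)

(* Defs.v *)
(* Mixed polynomials f(z, zbar), z = (u,v), are represented
   as multinomial polynomials {mpoly CC[4]} in the four formal variables
   'X_0 = u, 'X_1 = v, 'X_2 = ubar, 'X_3 = vbar, with coefficients in
   CC = R[i] (R = the Stdlib real numbers, via Rstruct), i.e. CC = complex numbers. *)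
From Stdlib Require Import Reals.
From HB Require Import structures.
From mathcomp Require Import all_boot all_order all_algebra.
From mathcomp Require Import complex.
From mathcomp Require Import Rstruct.
From mathcomp Require Import mpoly.
Set Implicit Arguments. Unset Strict Implicit. Unset Printing Implicit Defensive.
Import Order.TTheory GRing.Theory Num.Theory.
Local Open Scope ring_scope.

Definition CC : Type := (Rdefinitions.R : rcfType)[i].

Definition mixpoly := {mpoly CC[4]}.

Definition iu : 'I_4 := inord 0.
Definition iv : 'I_4 := inord 1.
Definition iub : 'I_4 := inord 2.
Definition ivb : 'I_4 := inord 3.

Definition mev (g : mixpoly) (u v : CC) : CC :=
  g.@[fun i : 'I_4 => nth 0 [:: u; v; u^*; v^*] i].

(* Wirtinger derivatives of a mixed polynomial: formal partial derivatives
   treating z and zbar as independent variables. *)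
Definition d_u (g : mixpoly) := mderiv iu g.
Definition d_v (g : mixpoly) := mderiv iv g.
Definition d_ub (g : mixpoly) := mderiv iub g.
Definition d_vb (g : mixpoly) := mderiv ivb g.

Definition critical (g : mixpoly) (u v : CC) : Prop :=
  let gu := mev (d_u g) u v in let gv := mev (d_v g) u v in
  let gub := mev (d_ub g) u v in let gvb := mev (d_vb g) u v in
  [/\ gu * gvb^* - gub^* * gv = 0,
      gu * gu^* - gub * gub^* = 0 &
      gv * gv^* - gvb * gvb^* = 0].

(* exponent of the term c z^nu zbar^mu, i.e. nu + mu in N^2 *)
Definition expo (m : 'X_{1..4}) : nat * nat := ((m iu + m iub)%N, (m iv + m ivb)%N).

Definition suppN (f : mixpoly) : seq (nat * nat) := map expo (msupp f).

Definition wt (P w : nat * nat) : nat := (P.1 * w.1 + P.2 * w.2)%N.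
Definition posw (P : nat * nat) : bool := (0 < P.1)%N && (0 < P.2)%N.

(* d(P) <= P.w  (d(P) = min of P over supp(f), equivalently over Gamma_+(f)) *)
Definition above (f : mixpoly) (P w : nat * nat) : bool :=
  has (fun s => wt P s <= wt P w)%N (suppN f).
Definition minimal (f : mixpoly) (P w : nat * nat) : bool :=
  all (fun s => wt P w <= wt P s)%N (suppN f).

(* lattice point w lies in Gamma_+(f) (intersection of the half-planes
   P.w >= d(P), P positive; the coordinate half-planes are automatic in N^2) *)
Definition inGplus (f : mixpoly) (w : nat * nat) : Prop :=
  forall P, posw P -> above f P w.

Definition onFace (f : mixpoly) (P w : nat * nat) : Prop :=
  [/\ inGplus f w, above f P w & minimal f P w].

(* Gamma(f): lattice points on compact faces (compact faces are exactly the
   Delta(P) with P strictly positive) *)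
Definition Gamma (f : mixpoly) (w : nat * nat) : Prop :=
  exists P, posw P /\ onFace f P w.

Definition convenient (f : mixpoly) : Prop :=
  (exists a, Gamma f (a, 0%N)) /\ (exists b, Gamma f (0%N, b)).

Definition faceP (f : mixpoly) (P : nat * nat) : mixpoly :=
  \sum_(m <- msupp f | minimal f P (expo m)) f@_m *: 'X_[m].

Definition faceV (f : mixpoly) (w : nat * nat) : mixpoly :=
  \sum_(m <- msupp f | expo m == w) f@_m *: 'X_[m].

(* P is the primitive positive weight vector of a compact 1-face Delta(P):
   Delta(P) contains two distinct points of supp(f) *)
Definition edgeW (f : mixpoly) (P : nat * nat) : Prop :=
  [/\ posw P, coprime P.1 P.2 &
      exists s1 s2, [/\ s1 \in suppN f, s2 \in suppN f, s1 != s2,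
                        minimal f P s1 & minimal f P s2]].

(* P_1: the compact 1-face weight with the largest ratio p1/p2;
   P_N: the one with the smallest ratio *)
Definition firstEdgeW (f : mixpoly) (P : nat * nat) : Prop :=
  edgeW f P /\ forall Q, edgeW f Q -> (Q.1 * P.2 <= P.1 * Q.2)%N.
Definition lastEdgeW (f : mixpoly) (P : nat * nat) : Prop :=
  edgeW f P /\ forall Q, edgeW f Q -> (P.1 * Q.2 <= Q.1 * P.2)%N.

Definition nonExtremeVertex (f : mixpoly) (w : nat * nat) : Prop :=
  w \in suppN f /\
  exists P Q, [/\ edgeW f P, edgeW f Q, P <> Q, minimal f P w & minimal f Q w].

Definition torus (u v : CC) : Prop := u != 0 /\ v != 0.

Definition strongly_newton_nondeg (f : mixpoly) : Prop :=
  forall P, posw P -> forall u v, torus u v -> ~ critical (faceP f P) u v.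

Definition strongly_inner_nondeg_boundary (f : mixpoly) : Prop :=
  [/\ (forall P, firstEdgeW f P -> forall u v, v != 0 -> ~ critical (faceP f P) u v),
      (forall P, lastEdgeW f P -> forall u v, u != 0 -> ~ critical (faceP f P) u v),
      (forall P, edgeW f P -> forall u v, torus u v -> ~ critical (faceP f P) u v) &
      (forall w, nonExtremeVertex f w -> forall u v, torus u v -> ~ critical (faceV f w) u v)].

(* Main.v *)
Require Import Defs.
From HB Require Import structures.
From mathcomp Require Import all_boot all_order all_algebra.
From mathcomp Require Import complex Rstruct mpoly.
From mathcomp Require Import zify ring.
Set Implicit Arguments. Unset Strict Implicit. Unset Printing Implicit Defensive.
Import Order.TTheory GRing.Theory Num.Theory.

Lemma seq_max (T : eqType) (R : T -> T -> bool) (s : seq T) x0 :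
  x0 \in s ->
  (forall a b, a \in s -> b \in s -> R a b || R b a) ->
  (forall a b c, a \in s -> b \in s -> c \in s -> R a b -> R b c -> R a c) ->
  exists2 m, m \in s & forall t, t \in s -> R t m.
Proof.
elim: s x0 => [//|x s IH] x0 _ Htot Htr.
case: s IH Htot Htr => [|y s] IH Htot Htr.
  exists x; first by rewrite mem_head.
  move=> t; rewrite inE => /eqP ->; have := Htot x x; rewrite mem_head; by case/(_ isT isT)/orP.
have [m Hm Hmax] : exists2 m, m \in y :: s & forall t, t \in y :: s -> R t m.
  apply: (IH y); first by rewrite mem_head.
    by move=> a b Ha Hb; apply: Htot; rewrite inE ?Ha ?Hb orbT.
  by move=> a b c Ha Hb Hc; apply: Htr; rewrite inE ?Ha ?Hb ?Hc orbT.
have Hm' : m \in x :: y :: s by rewrite inE Hm orbT.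
have Hx : x \in x :: y :: s by rewrite mem_head.
case/orP: (Htot x m Hx Hm') => Hxm.
  exists m => // t; rewrite inE => /orP [/eqP -> //| Ht]; exact: Hmax.
exists x => // t; rewrite inE => /orP [/eqP ->| Ht].
  have := Htot x x Hx Hx; by case/orP.
apply: (Htr t m x) => //; first by rewrite inE Ht orbT.
exact: Hmax.
Qed.

Definition allmin (S : seq (nat * nat)) (P w : nat * nat) : bool :=
  all (fun s => wt P w <= wt P s)%N S.

Definition isEdge (S : seq (nat * nat)) (Q : nat * nat) : Prop :=
  [/\ posw Q, coprime Q.1 Q.2 &
      exists s1 s2, [/\ s1 \in S, s2 \in S, s1 != s2, allmin S Q s1 & allmin S Q s2]].

Lemma coprime_gcd_div a b : (0 < b)%N -> coprime (a %/ gcdn a b) (b %/ gcdn a b).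
Proof.
move=> hb; set g := gcdn a b.
have gpos : (0 < g)%N by rewrite gcdn_gt0 hb orbT.
rewrite /coprime; apply/eqP.
have : (gcdn (a %/ g) (b %/ g) * g = 1 * g)%N.
  by rewrite muln_gcdl !divnK ?mul1n ?dvdn_gcdl ?dvdn_gcdr.
by move/eqP; rewrite eqn_pmul2r // => /eqP.
Qed.

Lemma pairE (s : nat * nat) : exists x y : nat, s = (x, y).
Proof. by case: s => x y; exists x, y. Qed.

Lemma comb S P b0 :
  (0%N, b0) \in S -> (forall t, t \in S -> t.1 = 0%N -> (b0 <= t.2)%N) ->
  posw P ->
  (forall Q, isEdge S Q -> (Q.1 * P.2 <= P.1 * Q.2)%N) ->
  allmin S P (0%N, b0).
Proof.
move=> Hb Hbmin HP Hmax; apply/allP => s0 Hs0; rewrite leqNgt; apply/negP => Hlt.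
case: (pairE P) HP Hmax Hlt => p1 [p2 eP]; subst P => /andP [/= Hp1 Hp2] Hmax.
case: (pairE s0) Hs0 => x0 [y0 e0]; subst s0 => Hs0.
rewrite /wt /= => Hlt.
have s01 : (0 < x0)%N.
  rewrite lt0n; apply/negP => /eqP e; subst x0.
  by have := Hbmin _ Hs0 erefl; move=> /= H; nia.
have s02 : (y0 < b0)%N by nia.
set S' := [seq t <- S | (0 < t.1)%N].
pose R (t s : nat * nat) := ((b0%:Z - t.2%:Z) * s.1%:Z <= (b0%:Z - s.2%:Z) * t.1%:Z)%R.
have [m Hm Hmm] : exists2 m, m \in S' & forall t, t \in S' -> R t m.
  apply: (@seq_max _ R S' (x0, y0)); first by rewrite mem_filter s01 Hs0.
    move=> a b _ _; rewrite /R.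
    case: (pairE a) => a1 [a2 ->]; case: (pairE b) => b1 [b2 ->] /=; lia.
  move=> a b c; rewrite !mem_filter => /andP [Ha _] /andP [Hb' _] /andP [Hc _].
  case: (pairE a) Ha => a1 [a2 ->]; case: (pairE b) Hb' => b1 [b2 ->];
    case: (pairE c) Hc => c1 [c2 ->] /= Ha Hb' Hc.
  rewrite /R /= => H1 H2.
  have K1 : ((b0%:Z - a2%:Z) * b1%:Z * c1%:Z <= (b0%:Z - b2%:Z) * a1%:Z * c1%:Z)%R.
    by rewrite ler_wpM2r.
  have K2 : ((b0%:Z - b2%:Z) * c1%:Z * a1%:Z <= (b0%:Z - c2%:Z) * b1%:Z * a1%:Z)%R.
    by rewrite ler_wpM2r.
  have K3 : (b1%:Z * ((b0%:Z - a2%:Z) * c1%:Z) <= b1%:Z * ((b0%:Z - c2%:Z) * a1%:Z))%R.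
    move: K1 K2; set x := (b0%:Z - a2%:Z)%R; set y := (b0%:Z - b2%:Z)%R; set z := (b0%:Z - c2%:Z)%R.
    move=> K1 K2.
    have -> : (b1%:Z * (x * c1%:Z) = x * b1%:Z * c1%:Z)%R by ring.
    have -> : (b1%:Z * (z * a1%:Z) = z * b1%:Z * a1%:Z)%R by ring.
    apply: (le_trans K1); have -> : (y * a1%:Z * c1%:Z = y * c1%:Z * a1%:Z)%R by ring.
    exact: K2.
  by rewrite ler_pM2l ?ltr0n in K3.
move: Hm; rewrite mem_filter => /andP [m1pos mS].
have Hs0m : R (x0, y0) m by apply: Hmm; rewrite mem_filter s01 Hs0.
case: (pairE m) m1pos mS Hs0m Hmm => m1 [m2 em]; subst m => /= m1pos mS Hs0m Hmm.
move: Hs0m; rewrite /R /= => Hs0m.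
have m2b : (m2 < b0)%N.
  rewrite ltnNge; apply/negP => hb.
  have h1 : (0 < (b0%:Z - y0%:Z) * m1%:Z)%R by apply: mulr_gt0; lia.
  have h2 : ((b0%:Z - m2%:Z) * x0%:Z <= 0)%R by apply: mulr_le0_ge0; lia.
  lia.
set a := (b0 - m2)%N.
set g := gcdn a m1.
have gpos : (0 < g)%N by rewrite gcdn_gt0 m1pos orbT.
set q1 := (a %/ g)%N; set q2 := (m1 %/ g)%N.
have Q1 : (q1 * g = a)%N by rewrite divnK ?dvdn_gcdl.
have Q2 : (q2 * g = m1)%N by rewrite divnK ?dvdn_gcdr.
have wtQ x y : (wt (q1, q2) (x, y) * g = a * x + m1 * y)%N.
  by rewrite /wt /= -Q1 -Q2; ring.
have Hmin0 : allmin S (q1, q2) (0%N, b0).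
  apply/allP => t Ht; case: (pairE t) Ht => t1 [t2 ->] Ht.
  rewrite -(leq_pmul2r gpos) !wtQ /=.
  have [t0|tpos] := posnP t1.
    subst t1; have := Hbmin _ Ht erefl; rewrite /= => H; nia.
  have : R (t1, t2) (m1, m2) by apply: Hmm; rewrite mem_filter tpos Ht.
  rewrite /R /= => H.
  rewrite /a; lia.
have HminM : allmin S (q1, q2) (m1, m2).
  apply/allP => t Ht; case: (pairE t) Ht => t1 [t2 ->] Ht.
  rewrite -(leq_pmul2r gpos) wtQ.
  move/allP: Hmin0 => /(_ _ Ht); rewrite -(leq_pmul2r gpos) !wtQ /=.
  rewrite /a; nia.
have HE : isEdge S (q1, q2).
  split.
  - by rewrite /posw; apply/andP; split; rewrite /= lt0n; apply/eqP => e;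
      [move: Q1; rewrite e /a; lia | move: Q2; rewrite e; lia].
  - exact: coprime_gcd_div.
  - exists (0%N, b0), (m1, m2); split => //.
    by apply/eqP => -[e _]; rewrite -e in m1pos.
have := Hmax _ HE; rewrite /= -(leq_pmul2r gpos) => H.
have {H} H : (a * p2 <= p1 * m1)%N by rewrite -Q1 -Q2; move: H; rewrite !mulnA [(q1 * g * p2)%N]mulnAC.

rewrite /a in H.
have h3 : ((b0%:Z - y0%:Z) * m1%:Z * p2%:Z <= (b0%:Z - m2%:Z) * x0%:Z * p2%:Z)%R.
  by rewrite ler_wpM2r.
have h4 : ((b0%:Z - m2%:Z) * p2%:Z * x0%:Z <= p1%:Z * m1%:Z * x0%:Z)%R.
  rewrite ler_wpM2r //; lia.
have h5 : (p1%:Z * x0%:Z * m1%:Z < (b0%:Z - y0%:Z) * p2%:Z * m1%:Z)%R.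
  rewrite ltr_pM2r ?ltr0n //; lia.
lia.
Qed.

Local Open Scope ring_scope.

Definition xv (u v : CC) := fun i : 'I_4 => nth 0 [:: u; v; u^*; v^*] i.

Definition Tm (k : 'I_4) (m : 'X_{1..4}) (x : 'I_4 -> CC) : CC :=
  (m k)%:R * \prod_(i < 4) x i ^+ (m - U_(k))%MM i.

Lemma mev_dsum k (p : pred 'X_{1..4}) (f : mixpoly) u v :
  mev (mderiv k (\sum_(m <- msupp f | p m) f@_m *: 'X_[m])) u v =
  \sum_(m <- msupp f | p m) f@_m * Tm k m (xv u v).
Proof.
rewrite /mev; elim: (msupp f) => [|m s IH]; first by rewrite !big_nil mderiv0 meval0.
rewrite !big_cons; case: (p m) => //.
by rewrite mderivD mevalD IH mderivZ mderivX !mevalZ mevalX.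
Qed.

Lemma ord4 (j : 'I_4) : [\/ j = iu, j = iv, j = iub | j = ivb].
Proof.
case: j => [[|[|[|[|//]]]] H]; [apply: Or41|apply: Or42|apply: Or43|apply: Or44];
  apply: val_inj; by rewrite /= inordK.
Qed.

Lemma xv_iu u v : xv u v iu = u. Proof. by rewrite /xv /iu inordK. Qed.
Lemma xv_iv u v : xv u v iv = v. Proof. by rewrite /xv /iv inordK. Qed.
Lemma xv_iub u v : xv u v iub = u^*. Proof. by rewrite /xv /iub inordK. Qed.
Lemma xv_ivb u v : xv u v ivb = v^*. Proof. by rewrite /xv /ivb inordK. Qed.

Lemma iu_iv : iu != iv. Proof. by apply/eqP => /(congr1 val); rewrite /= !inordK. Qed.
Lemma iu_iub : iu != iub. Proof. by apply/eqP => /(congr1 val); rewrite /= !inordK. Qed.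
Lemma iu_ivb : iu != ivb. Proof. by apply/eqP => /(congr1 val); rewrite /= !inordK. Qed.
Lemma iv_iub : iv != iub. Proof. by apply/eqP => /(congr1 val); rewrite /= !inordK. Qed.
Lemma iv_ivb : iv != ivb. Proof. by apply/eqP => /(congr1 val); rewrite /= !inordK. Qed.
Lemma iub_ivb : iub != ivb. Proof. by apply/eqP => /(congr1 val); rewrite /= !inordK. Qed.

Lemma prod_zero (x : 'I_4 -> CC) (n : 'X_{1..4}) i :
  x i = 0 -> (0 < n i)%N -> \prod_(j < 4) x j ^+ n j = 0.
Proof.
move=> xi ni; rewrite (bigD1 i) //= xi expr0n.
by rewrite eqn0Ngt ni mul0r.
Qed.

Lemma prod_eq (x y : 'I_4 -> CC) (n : 'X_{1..4}) :
  (forall j, (0 < n j)%N -> x j = y j) ->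
  \prod_(j < 4) x j ^+ n j = \prod_(j < 4) y j ^+ n j.
Proof.
move=> H; apply: eq_bigr => j _.
have [->|nj] := posnP (n j); first by rewrite !expr0.
by rewrite H // lt0n nj.
Qed.

Lemma transfer (f : mixpoly) (p1 p2 : pred 'X_{1..4}) (a ab k : 'I_4) x0 x1 :
  k != a -> k != ab -> x0 a = 0 -> x0 ab = 0 ->
  (forall j, j != a -> j != ab -> x0 j = x1 j) ->
  (forall m, m \in msupp f -> p2 m -> p1 m /\ (m a = 0 /\ m ab = 0)%N) ->
  (forall m, m \in msupp f -> p1 m -> ~~ p2 m -> (0 < m a + m ab)%N) ->
  \sum_(m <- msupp f | p1 m) f@_m * Tm k m x0 =
  \sum_(m <- msupp f | p2 m) f@_m * Tm k m x1.
Proof.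
move=> ka kab x0a x0ab Hx H2 H1.
rewrite big_mkcond [RHS]big_mkcond; apply: eq_big_seq => m Hm /=.
have nE j : j != k -> (m - U_(k))%MM j = m j.
  by move=> jk; rewrite mnmBE mnm1E eq_sym (negbTE jk) subn0.
case p2m: (p2 m).
  have [-> [ma mab]] := H2 m Hm p2m; congr (_ * (_ * _)); apply: prod_eq => j.
  rewrite mnmBE => hj; apply: Hx; apply/eqP => e; subst j.
    by rewrite ma in hj.
  by rewrite mab in hj.
case p1m: (p1 m) => //.
have := H1 m Hm p1m (negbT p2m).
rewrite /Tm; have [ma|ma] := posnP (m a).
  rewrite ma add0n => mab.
  by rewrite (@prod_zero x0 _ ab x0ab) ?mulr0 // nE // eq_sym.
by move=> _; rewrite (@prod_zero x0 _ a x0a) ?mulr0 // nE // eq_sym.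
Qed.

Lemma sum_zero (f : mixpoly) (p : pred 'X_{1..4}) k x :
  (forall m, m \in msupp f -> p m -> m k = 0%N) ->
  \sum_(m <- msupp f | p m) f@_m * Tm k m x = 0.
Proof.
move=> H; rewrite big_seq_cond big1 // => m /andP [Hm pm].
by rewrite /Tm H // mul0r mulr0.
Qed.

Lemma expo_in (f : mixpoly) m : m \in msupp f -> expo m \in suppN f.
Proof. by move=> Hm; rewrite /suppN map_f. Qed.

Lemma conv_axis_v f : convenient f ->
  exists b0, (0%N, b0) \in suppN f /\
    forall t, t \in suppN f -> t.1 = 0%N -> (b0 <= t.2)%N.
Proof.
case=> _ [b [P [HP [Hin _ _]]]].
have := Hin (b.+1, 1%N) isT; rewrite /above => /hasP [s Hs].
case: (pairE s) Hs => s1 [s2 ->] Hs; rewrite /wt /= => Hw.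
have s10 : s1 = 0%N by nia.
subst s1.
have ex : exists y, (0%N, y) \in suppN f by exists s2.
case: (ex_minnP ex) => b0 Hb0 Hmin; exists b0; split => // t Ht t1.
case: (pairE t) Ht t1 => x [y ->] Ht /= x0; subst x; exact: Hmin.
Qed.

Lemma conv_axis_u f : convenient f ->
  exists a0, (a0, 0%N) \in suppN f /\
    forall t, t \in suppN f -> t.2 = 0%N -> (a0 <= t.1)%N.
Proof.
case=> [[a [P [HP [Hin _ _]]]] _].
have := Hin (1%N, a.+1) isT; rewrite /above => /hasP [s Hs].
case: (pairE s) Hs => s1 [s2 ->] Hs; rewrite /wt /= => Hw.
have s20 : s2 = 0%N by nia.
subst s2.
have ex : exists y, (y, 0%N) \in suppN f by exists s1.
case: (ex_minnP ex) => a0 Ha0 Hmin; exists a0; split => // t Ht t1.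
case: (pairE t) Ht t1 => x [y ->] Ht /= x0; subst y; exact: Hmin.
Qed.

Lemma expoE m : expo m = ((m iu + m iub)%N, (m iv + m ivb)%N).
Proof. by []. Qed.

Lemma sideA (f : mixpoly) P b0 v :
  (0%N, b0) \in suppN f ->
  (forall t, t \in suppN f -> t.1 = 0%N -> (b0 <= t.2)%N) ->
  minimal f P (0%N, b0) -> posw P ->
  strongly_newton_nondeg f -> v != 0 -> ~ critical (faceP f P) 0 v.
Proof.
move=> Hb Hbmin HPb HP Hoka vn0 Hcr.
pose P' := (b0.+1, 1%N).
have P'min : minimal f P' (0%N, b0).
  apply/allP => t Ht; case: (pairE t) Ht => x [y ->] Ht; rewrite /wt /=.
  have [x0|xp] := posnP x; last by nia.
  by subst x; have := Hbmin _ Ht erefl; rewrite /=; lia.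
have P'eq e : e \in suppN f -> minimal f P' e -> e = (0%N, b0).
  move=> He /allP /(_ _ Hb); case: (pairE e) He => x [y ->] He; rewrite /wt /= => H.
  have x0 : x = 0%N by nia.
  subst x; have := Hbmin _ He erefl; rewrite /= => H2; congr (_, _); lia.
have F2 m : m \in msupp f -> minimal f P' (expo m) ->
    minimal f P (expo m) /\ (m iu = 0 /\ m iub = 0)%N.
  move=> Hm Hp; have E := P'eq _ (expo_in Hm) Hp; split; first by rewrite E.
  by move: E; rewrite /expo => -[e1 e2]; lia.
have F1 m : m \in msupp f -> minimal f P (expo m) -> ~~ minimal f P' (expo m) ->
    (0 < m iu + m iub)%N.
  move=> Hm Hp Hn; rewrite lt0n; apply/negP => /eqP e0.
  have He := expo_in Hm; move: Hp Hn He.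
  rewrite expoE e0 => Hp Hn He.
  have := Hbmin _ He erefl; rewrite /= => H1.
  move/allP: Hp => /(_ _ Hb); rewrite /wt /= => H2.
  case/andP: HP => _ hp2.
  have : (m iv + m ivb = b0)%N by apply/eqP; rewrite eqn_leq H1 -(leq_pmul2l hp2); lia.
  by move=> e; rewrite e P'min in Hn.
have Hx j : j != iu -> j != iub -> xv 0 v j = xv 1 v j.
  by case: (ord4 j) => ->; rewrite ?eqxx // !(xv_iv, xv_ivb).
have x0a : xv 0 v iu = 0 by rewrite xv_iu.
have x0ab : xv 0 v iub = 0 by rewrite xv_iub conjC0.
have Ev : \sum_(m <- msupp f | minimal f P' (expo m)) f@_m * Tm iv m (xv 1 v) =
          \sum_(m <- msupp f | minimal f P (expo m)) f@_m * Tm iv m (xv 0 v).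
  symmetry; apply: (transfer (a:=iu) (ab:=iub));
    [by rewrite eq_sym iu_iv|exact iv_iub|exact x0a|exact x0ab|exact Hx|exact F2|exact F1].
have Evb : \sum_(m <- msupp f | minimal f P' (expo m)) f@_m * Tm ivb m (xv 1 v) =
          \sum_(m <- msupp f | minimal f P (expo m)) f@_m * Tm ivb m (xv 0 v).
  symmetry; apply: (transfer (a:=iu) (ab:=iub));
    [by rewrite eq_sym iu_ivb|by rewrite eq_sym iub_ivb|exact x0a|exact x0ab|exact Hx|exact F2|exact F1].
have Eu : \sum_(m <- msupp f | minimal f P' (expo m)) f@_m * Tm iu m (xv 1 v) = 0.
  by apply: sum_zero => m Hm Hp; have [_ []] := F2 m Hm Hp.
have Eub : \sum_(m <- msupp f | minimal f P' (expo m)) f@_m * Tm iub m (xv 1 v) = 0.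
  by apply: sum_zero => m Hm Hp; have [_ []] := F2 m Hm Hp.
have Tv : torus 1 v by split => //; rewrite oner_neq0.
have HP' : posw P' by [].
apply: (Hoka P' HP' 1 v Tv).
move: Hcr; rewrite /critical /d_u /d_v /d_ub /d_vb /faceP !mev_dsum.
rewrite Ev Evb Eu Eub => -[_ _ H3]; split => //.
  by rewrite conjC0 !mul0r subr0.
by rewrite conjC0 !mul0r subr0.
Qed.

Lemma sideB (f : mixpoly) P a0 u :
  (a0, 0%N) \in suppN f ->
  (forall t, t \in suppN f -> t.2 = 0%N -> (a0 <= t.1)%N) ->
  minimal f P (a0, 0%N) -> posw P ->
  strongly_newton_nondeg f -> u != 0 -> ~ critical (faceP f P) u 0.
Proof.
move=> Hb Hbmin HPb HP Hoka un0 Hcr.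
pose P' := (1%N, a0.+1).
have P'min : minimal f P' (a0, 0%N).
  apply/allP => t Ht; case: (pairE t) Ht => x [y ->] Ht; rewrite /wt /=.
  have [y0|yp] := posnP y; last by nia.
  by subst y; have := Hbmin _ Ht erefl; rewrite /=; lia.
have P'eq e : e \in suppN f -> minimal f P' e -> e = (a0, 0%N).
  move=> He /allP /(_ _ Hb); case: (pairE e) He => x [y ->] He; rewrite /wt /= => H.
  have y0 : y = 0%N by nia.
  subst y; have := Hbmin _ He erefl; rewrite /= => H2; congr (_, _); lia.
have F2 m : m \in msupp f -> minimal f P' (expo m) ->
    minimal f P (expo m) /\ (m iv = 0 /\ m ivb = 0)%N.
  move=> Hm Hp; have E := P'eq _ (expo_in Hm) Hp; split; first by rewrite E.
  by move: E; rewrite /expo => -[e1 e2]; lia.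
have F1 m : m \in msupp f -> minimal f P (expo m) -> ~~ minimal f P' (expo m) ->
    (0 < m iv + m ivb)%N.
  move=> Hm Hp Hn; rewrite lt0n; apply/negP => /eqP e0.
  have He := expo_in Hm; move: Hp Hn He.
  rewrite expoE e0 => Hp Hn He.
  have := Hbmin _ He erefl; rewrite /= => H1.
  move/allP: Hp => /(_ _ Hb); rewrite /wt /= => H2.
  case/andP: HP => hp1 _.
  have : (m iu + m iub = a0)%N by apply/eqP; rewrite eqn_leq H1 -(leq_pmul2l hp1); lia.
  by move=> e; rewrite e P'min in Hn.
have Hx j : j != iv -> j != ivb -> xv u 0 j = xv u 1 j.
  by case: (ord4 j) => ->; rewrite ?eqxx // !(xv_iu, xv_iub).
have x0a : xv u 0 iv = 0 by rewrite xv_iv.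
have x0ab : xv u 0 ivb = 0 by rewrite xv_ivb conjC0.
have Ev : \sum_(m <- msupp f | minimal f P' (expo m)) f@_m * Tm iu m (xv u 1) =
          \sum_(m <- msupp f | minimal f P (expo m)) f@_m * Tm iu m (xv u 0).
  symmetry; apply: (transfer (a:=iv) (ab:=ivb));
    [by rewrite iu_iv|by rewrite iu_ivb|exact x0a|exact x0ab|exact Hx|exact F2|exact F1].
have Evb : \sum_(m <- msupp f | minimal f P' (expo m)) f@_m * Tm iub m (xv u 1) =
          \sum_(m <- msupp f | minimal f P (expo m)) f@_m * Tm iub m (xv u 0).
  symmetry; apply: (transfer (a:=iv) (ab:=ivb));
    [by rewrite eq_sym iv_iub|by rewrite iub_ivb|exact x0a|exact x0ab|exact Hx|exact F2|exact F1].
have Eu : \sum_(m <- msupp f | minimal f P' (expo m)) f@_m * Tm iv m (xv u 1) = 0.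
  by apply: sum_zero => m Hm Hp; have [_ []] := F2 m Hm Hp.
have Eub : \sum_(m <- msupp f | minimal f P' (expo m)) f@_m * Tm ivb m (xv u 1) = 0.
  by apply: sum_zero => m Hm Hp; have [_ []] := F2 m Hm Hp.
have Tv : torus u 1 by split => //; rewrite oner_neq0.
have HP' : posw P' by [].
apply: (Hoka P' HP' u 1 Tv).
move: Hcr; rewrite /critical /d_u /d_v /d_ub /d_vb /faceP !mev_dsum.
rewrite Ev Evb Eu Eub => -[_ H2 _]; split => //.
  by rewrite conjC0 !mulr0 subr0.
by rewrite conjC0 !mulr0 subr0.
Qed.

Definition swp (x : nat * nat) := (x.2, x.1).

Lemma swpK x : swp (swp x) = x. Proof. by case: x. Qed.

Lemma allmin_swap S P w : allmin (map swp S) (swp P) (swp w) = allmin S P w.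
Proof.
rewrite /allmin all_map; apply: eq_all => s; rewrite /wt /=.
by rewrite addnC [X in (_ <= X)%N]addnC.
Qed.

Lemma mem_swp S x : (x \in map swp S) = (swp x \in S).
Proof.
apply/mapP/idP => [[y Hy ->]|H]; first by rewrite swpK.
by exists (swp x); rewrite ?swpK.
Qed.

Lemma first_min (f : mixpoly) P b0 :
  (0%N, b0) \in suppN f ->
  (forall t, t \in suppN f -> t.1 = 0%N -> (b0 <= t.2)%N) ->
  firstEdgeW f P -> minimal f P (0%N, b0).
Proof.
move=> Hb Hbmin [[HP _ _] Hmax].
by apply: comb => // Q HQ; apply: Hmax.
Qed.

Lemma last_min (f : mixpoly) P a0 :
  (a0, 0%N) \in suppN f ->
  (forall t, t \in suppN f -> t.2 = 0%N -> (a0 <= t.1)%N) ->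
  lastEdgeW f P -> minimal f P (a0, 0%N).
Proof.
move=> Hb Hbmin [[HP _ _] Hmax].
have -> : minimal f P (a0, 0%N) = allmin (map swp (suppN f)) (swp P) (swp (a0, 0%N)) by rewrite allmin_swap.
apply: comb.
- by rewrite mem_swp.
- move=> t; rewrite mem_swp => Ht t1; apply: Hbmin Ht _; by rewrite /= t1.
- by case/andP: HP => h1 h2; rewrite /posw /= h2 h1.
- move=> Q [HQ cQ [s1 [s2 [Hs1 Hs2 neq m1 m2]]]].
  have E : edgeW f (swp Q).
    split.
    + by case/andP: HQ => h1 h2; rewrite /posw /= h2 h1.
    + by rewrite /= coprime_sym.
    + exists (swp s1), (swp s2); split; rewrite -?mem_swp //.
      * by apply/eqP => /(congr1 swp); rewrite !swpK; apply/eqP.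
      * by rewrite -[minimal _ _ _]/(allmin (suppN f) _ _) -allmin_swap !swpK.
      * by rewrite -[minimal _ _ _]/(allmin (suppN f) _ _) -allmin_swap !swpK.
  have := Hmax _ E; rewrite /= => H.
  by rewrite mulnC [X in (_ <= X)%N]mulnC.
Qed.

Lemma prop_eq (p1 p2 q1 q2 : nat) :
  (0 < p1)%N -> (0 < q1)%N -> coprime p1 p2 -> coprime q1 q2 ->
  (p1 * q2 = p2 * q1)%N -> p1 = q1 /\ p2 = q2.
Proof.
move=> hp hq cp cq e.
have d1 : (p1 %| q1)%N.
  by rewrite -(Gauss_dvdr _ cp) -e dvdn_mulr.
have d2 : (q1 %| p1)%N.
  by rewrite -(Gauss_dvdr _ cq) mulnC e dvdn_mull.
have e1 : p1 = q1 by apply/eqP; rewrite eqn_dvd d1 d2.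
subst q1; split => //; apply/eqP; rewrite -(eqn_pmul2l hp) e mulnC //.
Qed.

Lemma vertex_face (f : mixpoly) w P Q :
  w \in suppN f -> edgeW f P -> edgeW f Q -> P <> Q ->
  minimal f P w -> minimal f Q w ->
  faceV f w = faceP f ((P.1 + Q.1)%N, (P.2 + Q.2)%N).
Proof.
move=> Hw [HP cP _] [HQ cQ _] PQ mP mQ.
rewrite /faceV /faceP big_seq_cond [RHS]big_seq_cond; apply: eq_bigl => m.
case Hm: (m \in msupp f) => //=.
have He := expo_in Hm.
case: (pairE P) HP cP PQ mP mQ => p1 [p2 ->] /andP [/= hp1 hp2] /= cP.
case: (pairE Q) HQ cQ => q1 [q2 ->] /andP [/= hq1 hq2] /= cQ PQ mP mQ.
case: (pairE w) Hw mP mQ => w1 [w2 ->] Hw mP mQ.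
case: (pairE (expo m)) He => e1 [e2 ->] He.
apply/eqP/idP => [[-> ->]|H].
  apply/allP => s Hs; case: (pairE s) Hs => s1 [s2 ->] Hs.
  move/allP: mP => /(_ _ Hs); move/allP: mQ => /(_ _ Hs); rewrite /wt /= => h1 h2.
  lia.
move/allP: H => /(_ _ Hw); move/allP: mP => /(_ _ He); move/allP: mQ => /(_ _ He).
rewrite /wt /= => h1 h2 h3.
have E1 : (p1 * e1 + p2 * e2 = p1 * w1 + p2 * w2)%N by lia.
have E2 : (q1 * e1 + q2 * e2 = q1 * w1 + q2 * w2)%N by lia.
have det : (p1 * q2 != p2 * q1)%N.
  apply/eqP => e; have [] := prop_eq hp1 hq1 cP cQ e; move=> a b; subst; exact: PQ.
have K : ((p1%:Z * q2%:Z - p2%:Z * q1%:Z) * (e1%:Z - w1%:Z) = 0)%R.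
  have -> : ((p1%:Z * q2%:Z - p2%:Z * q1%:Z) * (e1%:Z - w1%:Z) =
    q2%:Z * (p1%:Z * (e1%:Z - w1%:Z) + p2%:Z * (e2%:Z - w2%:Z)) -
    p2%:Z * (q1%:Z * (e1%:Z - w1%:Z) + q2%:Z * (e2%:Z - w2%:Z)))%R by ring.
  have -> : (p1%:Z * (e1%:Z - w1%:Z) + p2%:Z * (e2%:Z - w2%:Z) = 0)%R by lia.
  have -> : (q1%:Z * (e1%:Z - w1%:Z) + q2%:Z * (e2%:Z - w2%:Z) = 0)%R by lia.
  by rewrite !mulr0 subr0.
move: K => /eqP; rewrite mulf_eq0 => /orP [|/eqP K]; first by move=> ?; exfalso; lia.
have ew1 : e1 = w1 by lia.
subst e1; have : (p2 * e2 = p2 * w2)%N by lia.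
by move/eqP; rewrite eqn_pmul2l // => /eqP ->.
Qed.

Theorem mainTheorem12 (f : mixpoly) :
  convenient f ->
  (exists P, edgeW f P) ->
  strongly_newton_nondeg f ->
  strongly_inner_nondeg_boundary f.
Proof.
move=> Hc _ Hoka.
have [b0 [Hb Hbmin]] := conv_axis_v Hc.
have [a0 [Ha Hamin]] := conv_axis_u Hc.
split.
- move=> P HF u v vn0.
  have HP : posw P by case: HF => -[].
  have [->|un0] := eqVneq u 0.
    exact: (sideA Hb Hbmin (first_min Hb Hbmin HF) HP Hoka vn0).
  exact: (Hoka P HP u v).
- move=> P HL u v un0.
  have HP : posw P by case: HL => -[].
  have [->|vn0] := eqVneq v 0.
    exact: (sideB Ha Hamin (last_min Ha Hamin HL) HP Hoka un0).
  exact: (Hoka P HP u v).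
- by move=> P [HP _ _] u v T; apply: Hoka.
- move=> w [Hw [P [Q [EP EQ PQ mP mQ]]]] u v T.
  rewrite (vertex_face Hw EP EQ PQ mP mQ); apply: Hoka => //.
  by case: EP => /andP [h1 h2] _ _; rewrite /posw /= !addn_gt0 h1 h2.
Qed.
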